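(* Let $(X,\sigma,\tau)$ be a full, separable, chronologically dense Lorentzian metric space satisfying the S-property, and let $x,y\in X$. Then $\mathbf{i}(x)\leq_{\overline{\tau}}\mathbf{i}(y)$ if and only if $y\in\overline{J^+(x)}$ and $x\in\overline{J^-(y)}$ (closures in $\sigma$).
   Context: A Lorentzian metric space $(X,\sigma,\tau)$ is a topological space with $\tau:X\times X\to[0,\infty]$ lower semicontinuous and satisfying $\tau(x,z)\geq\tau(x,y)+\tau(y,z)$ whenever $\tau(x,y),\tau(y,z)>0$. Write $x\ll y$ iff $\tau(x,y)>0$, $I^+(x)=\{y:x\ll y\}$, $I^-(x)=\{y:y\ll x\}$, $I^\pm[A]=\bigcup_{a\in A}I^\pm(a)$. Full: $I^\pm(x)\neq\emptyset$ for all $x$. Future (resp. past) chain: $x_n\ll x_{n+1}$ (resp. $x_{n+1}\ll x_n$). Separable: there is a countable $S$ with $x\ll y\Rightarrow\exists s\in S$, $x\ll s\ll y$. Chronologically dense: every $x$ with $I^-(x)\neq\emptyset$ (resp. $I^+(x)\neq\emptyset$) is the $\sigma$-limit of a future (resp. past) chain. Define $x\leq_\tau y$ iff $I^-(x)\subset I^-(y)$ and $I^+(y)\subset I^+(x)$, and $J^+(x)=\{y:x\leq_\tau y\}$, $J^-(y)=\{x:x\leq_\tau y\}$. Past set: $P=I^-[P]$; $\downarrow S=I^-[\{p:p\ll q\ \forall q\in S\}]$; IP: past set not the union of two proper past subsets; PIP: IP of the form $I^-(p)$; future sets, $\uparrow S$, IF, PIF dually. For nonempty IP $P$ and IF $F$,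 $P\sim_S F$ iff $P$ is a maximal IP in $\downarrow F$ and $F$ a maximal IF in $\uparrow P$; $P\sim_S\emptyset$ (resp. $\emptyset\sim_S F$) if the nonempty $P$ (resp. $F$) is S-related to no nonempty IF (resp. IP). S-property: for every $x$, $I^-(x)\sim_S I^+(x)$, and no other PIF (resp. PIP) is S-related to $I^-(x)$ (resp. $I^+(x)$). c-completion $\overline X=\{(P,F):P\sim_S F\}$, $\mathbf{i}(x)=(I^-(x),I^+(x))$. $\overline\tau((P,F),(P',F'))=0$ if $F=\emptyset$ or $P'=\emptyset$, otherwise $\lim_n\tau(q_n,p'_n)$ for a past chain $\{q_n\}$ with $I^+[\{q_n\}]=F$ and future chain $\{p'_n\}$ with $I^-[\{p'_n\}]=P'$. $a\,\overline\ll\,b$ iff $\overline\tau(a,b)>0$; with $\overline I^\pm$ the corresponding futures/pasts in $\overline X$, $a\leq_{\overline\tau}b$ iff $\overline I^-(a)\subset\overline I^-(b)$ and $\overline I^+(b)\subset\overline I^+(a)$. *)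

(* Defs.v *)
From HB Require Import structures.
From mathcomp Require Import all_boot all_order all_algebra.
From mathcomp Require Import all_classical all_reals all_analysis.
Set Implicit Arguments. Unset Strict Implicit. Unset Printing Implicit Defensive.
Import Order.TTheory GRing.Theory Num.Theory.
Local Open Scope classical_set_scope.
Local Open Scope ereal_scope.

Section LorentzianMetricSpaces.
Context {R : realType} {X : topologicalType}.
Variable tau : X -> X -> \bar R.

Definition is_lorentzian_metric : Prop :=
  (forall x y, 0 <= tau x y) /\
  lower_semicontinuous (fun p : X * X => tau p.1 p.2) /\
  (forall x y z, 0 < tau x y -> 0 < tau y z -> tau x y + tau y z <= tau x z).

Definition ll (x y : X) : Prop := 0 < tau x y.

Definition Ip (x : X) : set X := [set y | ll x y].
Definition Im (x : X) : set X := [set y | ll y x].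
Definition Ip_set (A : set X) : set X := \bigcup_(a in A) Ip a.
Definition Im_set (A : set X) : set X := \bigcup_(a in A) Im a.

Definition full : Prop := forall x, Ip x !=set0 /\ Im x !=set0.

Definition future_chain (p : nat -> X) : Prop := forall n, ll (p n) (p n.+1).
Definition past_chain (p : nat -> X) : Prop := forall n, ll (p n.+1) (p n).

Definition separable_lms : Prop :=
  exists S : set X, countable S /\
    forall x y, ll x y -> exists2 s, S s & ll x s /\ ll s y.

Definition chron_dense : Prop :=
  (forall x, Im x !=set0 ->
     exists p, future_chain p /\ p @ \oo --> x) /\
  (forall x, Ip x !=set0 ->
     exists p, past_chain p /\ p @ \oo --> x).

Definition leq_tau (x y : X) : Prop := Im x `<=` Im y /\ Ip y `<=` Ip x.
Definition Jp (x : X) : set X := [set y | leq_tau x y].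
Definition Jm (y : X) : set X := [set x | leq_tau x y].

Definition past_set (P : set X) : Prop := P = Im_set P.
Definition future_set (F : set X) : Prop := F = Ip_set F.

Definition IP (P : set X) : Prop :=
  P !=set0 /\ past_set P /\
  ~ (exists A B, past_set A /\ past_set B /\ A `<` P /\ B `<` P /\ P = A `|` B).
Definition IF (F : set X) : Prop :=
  F !=set0 /\ future_set F /\
  ~ (exists A B, future_set A /\ future_set B /\ A `<` F /\ B `<` F /\ F = A `|` B).

Definition down (S : set X) : set X :=
  Im_set [set p | forall q, S q -> ll p q].
Definition up (S : set X) : set X :=
  Ip_set [set p | forall q, S q -> ll q p].

Definition max_IP_in (P A : set X) : Prop :=
  IP P /\ P `<=` A /\ (forall P', IP P' -> P `<=` P' -> P' `<=` A -> P' = P).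
Definition max_IF_in (F A : set X) : Prop :=
  IF F /\ F `<=` A /\ (forall F', IF F' -> F `<=` F' -> F' `<=` A -> F' = F).

Definition Srel_ne (P F : set X) : Prop :=
  P !=set0 /\ F !=set0 /\ IP P /\ IF F /\ max_IP_in P (down F) /\ max_IF_in F (up P).

Definition Srel (P F : set X) : Prop :=
  Srel_ne P F \/
  (IP P /\ F = set0 /\ forall F', F' !=set0 -> IF F' -> ~ Srel_ne P F') \/
  (P = set0 /\ IF F /\ forall P', P' !=set0 -> IP P' -> ~ Srel_ne P' F).

Definition S_property : Prop :=
  forall x, Srel (Im x) (Ip x) /\
    (forall p, Srel (Im x) (Ip p) -> Ip p = Ip x) /\
    (forall p, Srel (Im p) (Ip x) -> Im p = Im x).

(* the c-completion: pairs (P,F) with P ~_S F *)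
Definition cpoint (a : set X * set X) : Prop := Srel a.1 a.2.
Definition iemb (x : X) : set X * set X := (Im x, Ip x).

Definition taubar_chains (a b : set X * set X) (qp : (nat -> X) * (nat -> X)) : Prop :=
  past_chain qp.1 /\ Ip_set (range qp.1) = a.2 /\
  future_chain qp.2 /\ Im_set (range qp.2) = b.1.

Definition taubar (a b : set X * set X) : \bar R :=
  if pselect (a.2 = set0 \/ b.1 = set0) is left _ then 0
  else match pselect (exists qp, taubar_chains a b qp) with
       | left h => let qp := projT1 (cid h) in
                   limn (fun n => tau (qp.1 n) (qp.2 n))
       | right _ => 0
       end.

Definition llbar (a b : set X * set X) : Prop := 0 < taubar a b.

Definition leq_taubar (a b : set X * set X) : Prop :=
  (forall c, cpoint c -> llbar c a -> llbar c b) /\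
  (forall c, cpoint c -> llbar b c -> llbar a c).

End LorentzianMetricSpaces.

(* Main.v *)
Require Import Defs.
From HB Require Import structures.
From mathcomp Require Import all_boot all_order all_algebra.
From mathcomp Require Import all_classical all_reals all_analysis.
Import Order.TTheory GRing.Theory Num.Theory.
Local Open Scope classical_set_scope.
Set Implicit Arguments. Unset Strict Implicit.

Definition Trans (R : realType) (X : topologicalType) (tau : X -> X -> \bar R) :=
  forall a b c, ll tau a b -> ll tau b c -> ll tau a c.
Definition Interp (R : realType) (X : topologicalType) (tau : X -> X -> \bar R) :=
  forall a b, ll tau a b -> exists s, ll tau a s /\ ll tau s b.
Definition rev (R : realType) (X : topologicalType) (tau : X -> X -> \bar R) :=
  fun a b => tau b a.

Lemma ll_trans (R : realType) (X : topologicalType) (tau : X -> X -> \bar R) :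
  is_lorentzian_metric tau -> Trans tau.
Proof.
move=> [h0 [_ htri]] a b c hab hbc; rewrite /ll.
apply: (lt_le_trans _ (htri _ _ _ hab hbc)).
exact: adde_gt0.
Qed.

Lemma sep_interp (R : realType) (X : topologicalType) (tau : X -> X -> \bar R) :
  separable_lms tau -> Interp tau.
Proof.
move=> [S [_ hS]] a b hab; have [s _ hs] := hS a b hab; by exists s.
Qed.

Lemma Trans_rev (R : realType) (X : topologicalType) (tau : X -> X -> \bar R) :
  Trans tau -> Trans (rev tau).
Proof. move=> ht a b c h1 h2; exact: ht h2 h1. Qed.

Lemma sep_rev (R : realType) (X : topologicalType) (tau : X -> X -> \bar R) :
  separable_lms tau -> separable_lms (rev tau).
Proof.
move=> [S [cS hS]]; exists S; split => // a b hab.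
have [s Ss [h1 h2]] := hS b a hab; by exists s.
Qed.

Lemma chain_strict (R : realType) (X : topologicalType) (tau : X -> X -> \bar R) p :
  Trans tau -> future_chain tau p -> forall m d, ll tau (p m) (p (m + d).+1).
Proof.
move=> ht hp m; elim=> [|d IH]; first by rewrite addn0; exact: hp.
rewrite addnS; exact: ht IH (hp _).
Qed.

Lemma past_Im_set (R : realType) (X : topologicalType) (tau : X -> X -> \bar R) S :
  Trans tau -> Interp tau -> past_set tau (Im_set tau S).
Proof.
move=> ht hi; apply/seteqP; split.
- move=> w [c Sc hwc]; have [s [h1 h2]] := hi _ _ hwc.
  exists s => //; by exists c.
- move=> w [s [c Sc hsc] hws]; exists c => //; exact: ht hws hsc.
Qed.

Lemma IP_directed (R : realType) (X : topologicalType) (tau : X -> X -> \bar R) P :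
  Trans tau -> Interp tau -> IP tau P ->
  forall a b, P a -> P b -> exists z, P z /\ ll tau a z /\ ll tau b z.
Proof.
move=> ht hi [hne [hpast hnot]] a b Pa Pb.
have sub : forall w c, P c -> ll tau w c -> P w.
  by move=> w c Pc h; rewrite hpast; exists c.
case: (pselect (exists z, P z /\ ll tau a z /\ ll tau b z)) => // hno.
exfalso; apply: hnot.
exists (Im_set tau (P `&` Ip tau a)), (Im_set tau (P `&` ~` Ip tau a)).
split; first exact: past_Im_set.
split; first exact: past_Im_set.
split.
  split; first by move=> w [c [Pc _] hwc]; exact: sub hwc.
  move=> /(_ b Pb) [c [Pc hac] hbc]; apply: hno; by exists c.
split.
  split; first by move=> w [c [Pc _] hwc]; exact: sub hwc.
  move=> /(_ a Pa) [c [Pc hac] hbc]; exact: hac hbc.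
apply/seteqP; split.
- move=> w Pw; have : Im_set tau P w by rewrite -hpast.
  case=> c Pc hwc; case: (pselect (ll tau a c)) => hac.
  + by left; exists c.
  + by right; exists c.
- by move=> w [[c [Pc _] hwc]|[c [Pc _] hwc]]; exact: sub hwc.
Qed.

Fixpoint mkchain (X : Type) (g : X * nat -> X) (z0 : X) (n : nat) : X :=
  match n with 0 => g (z0, 0%N) | m.+1 => g (mkchain g z0 m, m.+1) end.

Lemma IP_chain (R : realType) (X : topologicalType) (tau : X -> X -> \bar R) P :
  Trans tau -> separable_lms tau -> IP tau P ->
  exists p, future_chain tau p /\ Im_set tau (range p) = P.
Proof.
move=> ht hsep hIP.
have hi := sep_interp hsep.
have [hne [hpast _]] := hIP.
have sub : forall w c, P c -> ll tau w c -> P w.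
  by move=> w c Pc h; rewrite hpast; exists c.
case: hsep => S [cS hS].
case: hne => z0 Pz0.
move/countable_injP: cS => [f finj].
have : forall n, exists t, (exists2 s, S s & f s = n) -> S t /\ f t = n.
  move=> n; case: (pselect (exists2 s, S s & f s = n)) => [[s Ss fs]|hn].
    by exists s.
  by exists z0.
move/choice => [e he].
have : forall an : X * nat, exists z, P an.1 ->
    P z /\ ll tau an.1 z /\ (P (e an.2) -> ll tau (e an.2) z).
  move=> [a n] /=; case: (pselect (P a)) => Pa; last by exists z0.
  case: (pselect (P (e n))) => Pe.
    have [z [Pz [h1 h2]]] := IP_directed ht hi hIP Pa Pe; by exists z.
  have : Im_set tau P a by rewrite -hpast.
  case=> c Pc hac; by exists c.
move/choice => [g hg].
pose p := mkchain g z0.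
have hp : forall n, P (p n) /\ (P (e n) -> ll tau (e n) (p n)).
  elim=> [|n [IH _]].
    by have [? [_ ?]] := hg (z0, 0%N) Pz0.
  by have [? [_ ?]] := hg (p n, n.+1) IH.
exists p; split.
  move=> n; by have [_ [? _]] := hg (p n, n.+1) (hp n).1.
apply/seteqP; split.
  move=> w [_ [n _ <-] hw]; exact: sub (hp n).1 hw.
move=> w Pw; have : Im_set tau P w by rewrite -hpast.
case=> c Pc hwc; have [s Ss [hws hsc]] := hS w c hwc.
have Ps : P s := sub _ _ Pc hsc.
have [Se fe] := he (f s) (ex_intro2 _ _ s Ss erefl).
have es : e (f s) = s.
  by apply: finj => //; rewrite inE.
have := (hp (f s)).2; rewrite es => /(_ Ps) hsp.
exists (p (f s)); first by exists (f s).
exact: ht hws hsp.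
Qed.

Lemma IF_chain (R : realType) (X : topologicalType) (tau : X -> X -> \bar R) F :
  Trans tau -> separable_lms tau -> IF tau F ->
  exists q, past_chain tau q /\ Ip_set tau (range q) = F.
Proof.
move=> ht hsep hIF.
exact: (@IP_chain R X (rev tau) F (Trans_rev ht) (sep_rev hsep) hIF).
Qed.

Lemma taubar_pos_inv (R : realType) (X : topologicalType) (tau : X -> X -> \bar R) a b :
  (forall x y, (0 <= tau x y)%E) -> (0 < taubar tau a b)%E ->
  exists qp, taubar_chains tau a b qp /\ exists z, a.2 z /\ b.1 z.
Proof.
move=> h0; rewrite /taubar.
case: pselect => [_|hne]; first by rewrite ltxx.
case: pselect => [hex|]; last by rewrite ltxx.
case: (cid hex) => [[q p] hqp] /= hlim.
exists (q, p); split => //.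
case: hqp => [hq [hF [hp hP]]] /=.
case: (pselect (exists n, ll tau (q n) (p n))) => [[n hn]|hno].
  exists (p n); split.
    rewrite -hF; exists (q n) => //; by exists n.
  rewrite -hP; exists (p n.+1); [by exists n.+1|exact: hp n].
exfalso.
have E : (fun n => tau (q n) (p n)) = fun _ => 0%E.
  apply: funext => n; apply/eqP; rewrite eq_le h0 andbT leNgt.
  apply/negP => h; apply: hno; by exists n.
move: hlim; rewrite E lim_cst ?ltxx //.
Qed.

Lemma taubar_pos (R : realType) (X : topologicalType) (tau : X -> X -> \bar R) a b qp0 :
  is_lorentzian_metric tau ->
  taubar_chains tau a b qp0 -> (exists z, a.2 z /\ b.1 z) -> (0 < taubar tau a b)%E.
Proof.
move=> hlm hqp0 [z [hz1 hz2]].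
have [h0 [_ htri]] := hlm.
have ht := ll_trans hlm.
rewrite /taubar.
case: pselect => [[E|E]|_].
- by move: hz1; rewrite E.
- by move: hz2; rewrite E.
case: pselect => [hex|hno]; last by exfalso; apply: hno; exists qp0.
case: (cid hex) => [[q p] [hq [hF [hp hP]]]] /=.
move: hz1 hz2; rewrite -hF -hP => -[_ [m _ <-] hm] [_ [k _ <-] hk].
set u := fun n => tau (q n) (p n).
have mono : nondecreasing_seq u.
  apply/nondecreasing_seqP => n; rewrite /u.
  case: (pselect (0 < tau (q n) (p n))%E) => hpos; last first.
    have -> : tau (q n) (p n) = 0%E.
      by apply/eqP; rewrite eq_le h0 andbT leNgt; apply/negP.
    exact: h0.
  have h1 := htri _ _ _ hpos (hp n).
  have h1' : (tau (q n) (p n) <= tau (q n) (p n.+1))%E.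
    apply: le_trans h1; exact: leeDl.
  have hpos2 : ll tau (q n) (p n.+1) := lt_le_trans hpos h1'.
  have h2 := htri _ _ _ (hq n) hpos2.
  apply: le_trans h1' _; apply: le_trans h2; exact: leeDr.
have Hl : limn u = ereal_sup (range u).
  by apply: cvg_lim; [exact: ereal_hausdorff|exact: ereal_nondecreasing_cvgn].
rewrite Hl.
have hN : ll tau (q (m + k).+1) (p (m + k).+1).
  have hqN : ll tau (q (m + k).+1) (q m) := @chain_strict R X (rev tau) q (Trans_rev ht) hq m k.
  have hpN : ll tau (p k) (p (m + k).+1).
    rewrite addnC; exact: chain_strict.
  exact: ht hqN (ht _ _ _ hm (ht _ _ _ hk hpN)).
apply: (lt_le_trans hN); apply: ereal_sup_ubound; exists (m + k).+1 => //.
Qed.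

Lemma nbhs_Ip (R : realType) (X : topologicalType) (tau : X -> X -> \bar R) :
  is_lorentzian_metric tau -> forall w x, ll tau w x -> nbhs x (Ip tau w).
Proof.
move=> [_ [hlsc _]] w x hwx.
have [V [[A B] /= [nA nB] hAB] hVP] := hlsc (w, x) 0%R hwx.
apply: (filterS _ nB) => t Bt; apply: (hVP (w, t)); apply: hAB; split => //.
exact: nbhs_singleton.
Qed.

Lemma nbhs_Im (R : realType) (X : topologicalType) (tau : X -> X -> \bar R) :
  is_lorentzian_metric tau -> forall w x, ll tau x w -> nbhs x (Defs.Im tau w).
Proof.
move=> [_ [hlsc _]] w x hwx.
have [V [[A B] /= [nA nB] hAB] hVP] := hlsc (x, w) 0%R hwx.
apply: (filterS _ nA) => t At; apply: (hVP (t, w)); apply: hAB; split => //.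
exact: nbhs_singleton.
Qed.

Lemma IP_IF_of (R : realType) (X : topologicalType) (tau : X -> X -> \bar R) :
  full tau -> S_property tau -> forall z, IP tau (Defs.Im tau z) /\ IF tau (Ip tau z).
Proof.
move=> hf hS z; have [hIp hIm] := hf z.
case: (hS z) => hs _.
case: hs => [[_ [_ [hP [hF _]]]]|[[hP [E _]]|[E _]]]; first by [].
- by exfalso; case: hIp => w; rewrite E.
- by exfalso; case: hIm => w; rewrite E.
Qed.

Unset Implicit Arguments.

Theorem mainTheorem19 (R : realType) (X : topologicalType) (tau : X -> X -> \bar R) :
  is_lorentzian_metric tau -> full tau -> separable_lms tau -> chron_dense tau ->
  S_property tau ->
  forall x y : X,
    leq_taubar tau (iemb tau x) (iemb tau y) <->
    (closure (Jp tau x) y /\ closure (Jm tau y) x).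
Proof.
move=> hlm hfull hsep _ hS x y.
have h0 := hlm.1.
have ht := ll_trans hlm.
have hi := sep_interp hsep.
have fch : forall z, exists p, future_chain tau p /\ Im_set tau (range p) = Defs.Im tau z.
  move=> z; exact: IP_chain ht hsep (IP_IF_of hfull hS z).1.
have pch : forall z, exists q, past_chain tau q /\ Ip_set tau (range q) = Ip tau z.
  move=> z; exact: IF_chain ht hsep (IP_IF_of hfull hS z).2.
have cp : forall z, Defs.cpoint tau (iemb tau z) := fun z => (hS z).1.
have llz : forall z w, ll tau z w -> llbar tau (iemb tau z) (iemb tau w).
  move=> z w hzw; have [q [hq hqE]] := pch z; have [p [hp hpE]] := fch w.
  have [s [hzs hsw]] := hi _ _ hzw.
  apply: (@taubar_pos R X tau _ _ (q, p)) => //.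
  by exists s.
have llz_inv : forall z w, llbar tau (iemb tau z) (iemb tau w) -> ll tau z w.
  move=> z w /(taubar_pos_inv h0) [qp [_ [s [h1 h2]]]]; exact: ht h1 h2.
split.
- move=> [c1 c2].
  have hle : leq_tau tau x y.
    split.
    + move=> z hzx; apply: llz_inv; exact: c1 (cp z) (llz _ _ hzx).
    + move=> z hyz; apply: llz_inv; exact: c2 (cp z) (llz _ _ hyz).
  by split; apply: subset_closure.
- move=> [cy cx]; split.
  + move=> c hc /(taubar_pos_inv h0) [[q p] [[hq [hqE [hp hpE]]] [w [hw1 hw2]]]].
    have [p' [hp' hp'E]] := fch y.
    apply: (@taubar_pos R X tau _ _ (q, p')) => //.
    exists w; split => //.
    have [v [hv1 hv2]] := cx _ (nbhs_Ip hlm hw2).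
    exact: hv1.1 _ hv2.
  + move=> c hc /(taubar_pos_inv h0) [[q p] [[hq [hqE [hp hpE]]] [w [hw1 hw2]]]].
    have [q' [hq' hq'E]] := pch x.
    apply: (@taubar_pos R X tau _ _ (q', p)) => //.
    exists w; split => //.
    have [v [hv1 hv2]] := cy _ (nbhs_Im hlm hw1).
    exact: hv1.2 _ hv2.
Qed.
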